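(* Let $v\in\{1,\dots,m\}$, let $B\subseteq\mathcal{L}^{mn}$ be a ball, let $B''\subseteq B$ be a ball and $\mu_{v-1}>0$ such that $\|M_{v-1}(A)\|_\infty>\rho(B)\,\mu_{v-1}\,M_{v-2}(B'')$ for all $A\in B''$. If $B'\subseteq B''$ is a ball with $\rho(B')<\tfrac12\mu_{v-1}\rho(B'')$, then $\|M_{v-1}(A')\|_\infty>\tfrac12 M_{v-1}(B')$ for every $A'\in B'$.
   Context: $\mathbb{F}$ is the finite field with $k$ elements, $\mathcal{L}=\mathbb{F}((X^{-1}))$ with absolute value $|x|=k^{n}$ where $X^n$ is the leading term of $x$, $\|\mathbf{x}\|_\infty=\max_i|x_i|$; $m\times n$ matrices are identified with $\mathcal{L}^{mn}$; balls are closed balls $\{\|A-C\|_\infty\le\rho\}$ with radius $\rho(\cdot)$. For $A\in\mathcal{L}^{mn}$ let $\tilde A^*=\begin{pmatrix}A^T&I_n\\ I_m&0\end{pmatrix}$ and $\mathrm{col}_l(\tilde A^* )$ its $l$-th column; $\mathbf{x}\cdot\mathbf{y}=\sum x_iy_i$. Fix vectors $\mathbf{y}_1,\dots,\mathbf{y}_m\in\mathcal{L}^{m+n}$ that are orthonormal (i.e. $\mathbf{y}_i\cdot\mathbf{y}_j=\delta_{ij}$ and $\|\sum_it_i\mathbf{y}_i\|_\infty=\max_i|t_i|$ for all $t_i\in\mathcal{L}$). Let $G(A)$ be the $m\times m$ matrix with entries $G(A)_{il}=\mathbf{y}_i\cdot\mathrm{col}_l(\tilde A^* )$. For $1\le v\le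 m$, $M_v(A)\in\mathcal{L}^{\binom{m}{v}^2}$ is the vector of all $v\times v$ minors of $G(A)$ in a fixed order; $M_0(A)=M_{-1}(A)=(1)\in\mathcal{L}$. For $K\subseteq\mathcal{L}^{mn}$, $M_v(K)=\max_{A\in K}\|M_v(A)\|_\infty$. *)

(* Defs.v *)
From HB Require Import structures.
From mathcomp Require Import all_boot all_order all_fingroup all_algebra.
From mathcomp Require Import zify.
From mathcomp Require Import boolp classical_sets reals.
Set Implicit Arguments. Unset Strict Implicit. Unset Printing Implicit Defensive.
Import Order.TTheory GRing.Theory Num.Theory.
Local Open Scope ring_scope.

(* The field L = F((X^{-1})) of formal Laurent series in X^{-1} over a       *)
(* finite field F: an element is given by its coefficient function           *)
(* i |-> (coefficient of X^i), whose support is bounded above.               *)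
Section Laurent.
Variable F : finFieldType.

Definition bounded_above (f : int -> F) : Prop :=
  exists N : int, forall i : int, N < i -> f i = 0.

Record laurent := Laurent { lcoef : int -> F ; lcoefP : bounded_above lcoef }.

Definition lbnd (x : laurent) : int := projT1 (cid (lcoefP x)).
Lemma lbndP (x : laurent) i : lbnd x < i -> lcoef x i = 0.
Proof. exact: (projT2 (cid (lcoefP x))). Qed.

Definition tnat (z : int) : nat := if z is Posz k then k else 0%N.

Lemma lzero_bnd : bounded_above (fun _ => 0).
Proof. by exists 0. Qed.
Definition lzero : laurent := Laurent lzero_bnd.

Lemma lone_bnd : bounded_above (fun i => if i == 0 then 1 else 0).
Proof. by exists 0 => i Hi; rewrite gt_eqF. Qed.
Definition lone : laurent := Laurent lone_bnd.

Lemma ladd_bnd (x y : laurent) : bounded_above (fun i => lcoef x i + lcoef y i).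
Proof.
exists (Num.max (lbnd x) (lbnd y)) => i; rewrite gt_max => /andP[hx hy].
by rewrite !lbndP // addr0.
Qed.
Definition ladd (x y : laurent) : laurent := Laurent (ladd_bnd x y).

Lemma lopp_bnd (x : laurent) : bounded_above (fun i => - lcoef x i).
Proof. by exists (lbnd x) => i hi; rewrite lbndP // oppr0. Qed.
Definition lopp (x : laurent) : laurent := Laurent (lopp_bnd x).

(* Cauchy product: (xy)_n = sum_{n - bnd y <= i <= bnd x} x_i y_(n-i) *)
Definition lmul_coef (x y : laurent) (n : int) : F :=
  \sum_(j < tnat (lbnd x + lbnd y - n + 1))
     lcoef x (lbnd x - j%:Z) * lcoef y (n - lbnd x + j%:Z).

Lemma lmul_bnd (x y : laurent) : bounded_above (lmul_coef x y).
Proof.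
exists (lbnd x + lbnd y) => i hi; rewrite /lmul_coef.
have -> : tnat (lbnd x + lbnd y - i + 1) = 0%N.
  case E : (lbnd x + lbnd y - i + 1) => [k|k] //=.
  have : lbnd x + lbnd y - i + 1 <= 0.
    by move: hi; lia.
  by rewrite E; case: k {E} => // k; rewrite lez_nat.
by rewrite big_ord0.
Qed.
Definition lmul (x y : laurent) : laurent := Laurent (lmul_bnd x y).

Definition is_ldeg (x : laurent) (d : int) : Prop :=
  lcoef x d != 0 /\ forall i, d < i -> lcoef x i = 0.

Definition labs (R : realType) (x : laurent) : R :=
  match pselect (exists d, is_ldeg x d) with
  | left p => ((#|F|)%:R : R) ^ (projT1 (cid p))
  | right _ => 0
  end.

End Laurent.

Section Matrices.
Variables (F : finFieldType) (R : realType).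
Local Notation L := (laurent F).

Definition mxnorm m n (A : 'M[L]_(m, n)) : R :=
  \big[Num.max/0]_(ij : 'I_m * 'I_n) labs R (A ij.1 ij.2).

Definition vnorm p (x : 'I_p -> L) : R :=
  \big[Num.max/0]_(i : 'I_p) labs R (x i).

(* closed ball {A : ||A - C|| <= k^r}; its radius is rho = k^r *)
Definition in_ball m n (C : 'M[L]_(m, n)) (r : int) (A : 'M[L]_(m, n)) : Prop :=
  mxnorm (\matrix_(i, j) ladd (A i j) (lopp (C i j))) <= ((#|F|)%:R : R) ^ r.

Definition radius (r : int) : R := ((#|F|)%:R : R) ^ r.

Definition ldot p (x y : 'I_p -> L) : L :=
  \big[@ladd F/lzero F]_(i < p) lmul (x i) (y i).

Definition ortho_normal m p (y : 'I_m -> 'I_p -> L) : Prop :=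
  (forall i j, ldot (y i) (y j) = if i == j then lone F else lzero F) /\
  (forall t : 'I_m -> L,
     vnorm (fun k => \big[@ladd F/lzero F]_(i < m) lmul (t i) (y i k))
     = vnorm t).

(* tilde A^star = ( A^T  I_n ; I_m  0 ), an (n+m) x (m+n) matrix *)
Definition tAstar m n (A : 'M[L]_(m, n)) : 'M[L]_(n + m, m + n) :=
  \matrix_(i, j)
    match split i, split j with
    | inl i', inl j' => A j' i'
    | inl i', inr j' => if i' == j' then lone F else lzero F
    | inr i', inl j' => if i' == j' then lone F else lzero F
    | inr _, inr _ => lzero F
    end.

Definition Gmx m n (y : 'I_m -> 'I_(n + m) -> L) (A : 'M[L]_(m, n)) : 'M[L]_m :=
  \matrix_(i, l) ldot (y i) (fun k => tAstar A k (lshift n l)).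

Definition ldet v (M : 'M[L]_v) : L :=
  \big[@ladd F/lzero F]_(s : 'S_v)
     (let p := \big[@lmul F/lone F]_(i < v) M i (s i) in
      if odd_perm s then lopp p else p).

Definition incr v m (f : {ffun 'I_v -> 'I_m}) : bool :=
  [forall i : 'I_v, forall j : 'I_v, (i < j)%N ==> (f i < f j)%N].

(* ||M_w(A)||_oo: max of |all w x w minors of G(A)|; M_0 = M_{-1} = (1) *)
Definition Mnorm m n (y : 'I_m -> 'I_(n + m) -> L) (w : int) (A : 'M[L]_(m, n)) : R :=
  match w with
  | Posz w'.+1 =>
      \big[Num.max/0]_(fg : {ffun 'I_w'.+1 -> 'I_m} * {ffun 'I_w'.+1 -> 'I_m}
                       | incr fg.1 && incr fg.2)
         labs R (ldet (\matrix_(a, b) Gmx y A (fg.1 a) (fg.2 b)))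
  | _ => labs R (lone F)
  end.

(* M_w(K) = max_{A in K} ||M_w(A)||, for K a ball (the max is attained;
   we write it as a supremum) *)
Definition Mball m n (y : 'I_m -> 'I_(n + m) -> L) (w : int)
  (C : 'M[L]_(m, n)) (r : int) : R :=
  sup [set Mnorm y w A | A in in_ball C r].

End Matrices.

(* Main.v *)
Require Import Defs.
From HB Require Import structures.
From mathcomp Require Import all_boot all_order all_fingroup all_algebra.
From mathcomp Require Import zify.
From mathcomp Require Import boolp classical_sets reals.
Set Implicit Arguments. Unset Strict Implicit. Unset Printing Implicit Defensive.
Import Order.TTheory GRing.Theory Num.Theory.
Local Open Scope ring_scope.

Section LRing.
Variable F : finFieldType.
Local Notation L := (laurent F).

Lemma lext (x y : L) : (forall i, lcoef x i = lcoef y i) -> x = y.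
Proof.
case: x => fx px; case: y => fy py /= H.
have E : fx = fy by apply: funext.
subst fy; congr Laurent; exact: Prop_irrelevance.
Qed.

Definition vanish (x : L) (a : int) := forall i, a < i -> lcoef x i = 0.

Definition conv (x y : L) (a : int) (K : nat) (n : int) : F :=
  \sum_(j < K) lcoef x (a - j%:Z) * lcoef y (n - a + j%:Z).

Lemma conv_ext x y a b n K K' : vanish y b -> a + b - n + 1 <= K%:Z -> (K <= K')%N ->
  conv x y a K n = conv x y a K' n.
Proof.
move=> vy hK hKK'; rewrite /conv.
rewrite -(subnKC hKK') big_split_ord /= [X in _ = _ + X]big1 ?addr0 //.
move=> j _; rewrite [lcoef y _]vy ?mulr0 //.
rewrite PoszD; lia.
Qed.

Lemma conv_shift x y a K n : lcoef x (a + 1) = 0 ->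
  conv x y (a + 1) K.+1 n = conv x y a K n.
Proof.
move=> vx; rewrite /conv big_ord_recl /= subr0 vx mul0r add0r.
apply: eq_bigr => j _; congr (lcoef x _ * lcoef y _); rewrite /bump /=; lia.
Qed.

Lemma conv_shiftn x y a K n s : vanish x a ->
  conv x y (a + s%:Z) (K + s) n = conv x y a K n.
Proof.
move=> vx; elim: s => [|s IH]; first by rewrite addr0 addn0.
rewrite addnS -IH.
have -> : a + s.+1%:Z = (a + s%:Z) + 1 by lia.
by rewrite conv_shift // vx //; lia.
Qed.

Lemma lmul_conv x y a b K n : vanish x a -> vanish y b -> a + b - n + 1 <= K%:Z ->
  lcoef (lmul x y) n = conv x y a K n.
Proof.
move=> vx vy hK.
have vx0 : vanish x (lbnd x) by move=> i; apply: lbndP.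
have vy0 : vanish y (lbnd y) by move=> i; apply: lbndP.
rewrite /= /lmul_coef -/(conv x y (lbnd x) _ n).
set a0 := lbnd x; set K0 := tnat _.
have hK0 : a0 + lbnd y - n + 1 <= K0%:Z by rewrite /K0; case: (a0 + lbnd y - n + 1) => //= k; lia.
pose s0 := tnat (a - a0); pose s := tnat (a0 - a).
have e0 : a0 + s0%:Z = Num.max a a0 by rewrite /s0; case E: (a - a0) => [k|k] /=; lia.
have e1 : a + s%:Z = Num.max a a0 by rewrite /s; case E: (a0 - a) => [k|k] /=; lia.
rewrite -(conv_shiftn _ _ _ s0 vx0) -(conv_shiftn _ _ _ s vx) e0 e1.
rewrite (@conv_ext x y _ (lbnd y) _ _ (K0 + s0 + (K + s))%N); last 2 first.
- by rewrite -e0; lia.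
- by rewrite leq_addr.
rewrite [RHS](@conv_ext x y _ b _ _ (K0 + s0 + (K + s))%N) //.
- by rewrite -e1; lia.
- by rewrite leq_addl.
- exact: vy0.
Qed.
Lemma lmul_vanish x y a b : vanish x a -> vanish y b -> vanish (lmul x y) (a + b).
Proof.
move=> vx vy i hi; rewrite (@lmul_conv x y a b 0) //; first by rewrite /conv big_ord0.
lia.
Qed.

Definition tr (x : L) (a : int) (K : nat) : {poly F} := \poly_(i < K) lcoef x (a - i%:Z).

Lemma lmul_poly x y a b K d : vanish x a -> vanish y b -> (d < K)%N ->
  lcoef (lmul x y) (a + b - d%:Z) = (tr x a K * tr y b K)`_d.
Proof.
move=> vx vy hd; rewrite (@lmul_conv x y a b d.+1) //; last first.
  have -> : a + b - (a + b - d%:Z) + 1 = d.+1%:Z by rewrite -addn1 PoszD; lia.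
  by [].
rewrite coefM /conv; apply: eq_bigr => j _.
have hj : (j <= d)%N by rewrite -ltnS.
rewrite !coef_poly ifT; last by apply: leq_ltn_trans hd.
rewrite ifT; last by apply: leq_ltn_trans (leq_subr _ _) hd.
congr (_ * lcoef y _); rewrite -subzn //; move: (nat_of_ord j) => jj; lia.
Qed.

Lemma coefM_eq (p q p' q' : {poly F}) d :
  (forall i, (i <= d)%N -> p`_i = p'`_i) -> (forall i, (i <= d)%N -> q`_i = q'`_i) ->
  (p * q)`_d = (p' * q')`_d.
Proof.
move=> hp hq; rewrite !coefM; apply: eq_bigr => j _.
have hj : (j <= d)%N by rewrite -ltnS.
by rewrite hp // hq // leq_subr.
Qed.

Lemma vanish_lbnd x : vanish x (lbnd x).
Proof. by move=> i; apply: lbndP. Qed.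
Arguments vanish_lbnd : clear implicits.

Lemma vanish_le x a b : vanish x a -> a <= b -> vanish x b.
Proof. by move=> vx hab i hi; apply: vx; apply: le_lt_trans hi. Qed.

Lemma int_cases (A n : int) : A < n \/ exists d : nat, n = A - d%:Z.
Proof.
case: (ltP A n) => h; first by left.
right; exists (tnat (A - n)); case E: (A - n) => [k|k] /=; lia.
Qed.

Lemma tr_vanish x a K d : (d < K)%N -> (tr x a K)`_d = lcoef x (a - d%:Z).
Proof. by move=> h; rewrite coef_poly h. Qed.

Lemma lmulA : associative (@lmul F).
Proof.
move=> x y z; apply: lext => n.
set a := lbnd x; set b := lbnd y; set c := lbnd z.
have vx := vanish_lbnd x; have vy := vanish_lbnd y; have vz := vanish_lbnd z.
have vxy := lmul_vanish vx vy; have vyz := lmul_vanish vy vz.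
case: (int_cases (a + b + c) n) => [hn|[d ->]].
  rewrite (lmul_vanish vx vyz) ?(lmul_vanish vxy vz) //; lia.
have -> : a + b + c - d%:Z = a + (b + c) - d%:Z by lia.
rewrite (lmul_poly (K := d.+1) vx vyz) //.
have -> : a + (b + c) - d%:Z = (a + b) + c - d%:Z by lia.
rewrite (lmul_poly (K := d.+1) vxy vz) //.
transitivity ((tr x a d.+1 * (tr y b d.+1 * tr z c d.+1))`_d).
  apply: coefM_eq => // i hi.
  by rewrite tr_vanish ?ltnS // (lmul_poly (K := d.+1)).
rewrite mulrA; symmetry; apply: coefM_eq => // i hi.
by rewrite tr_vanish ?ltnS // (lmul_poly (K := d.+1)).
Qed.

Lemma lmulC : commutative (@lmul F).
Proof.
move=> x y; apply: lext => n.
set a := lbnd x; set b := lbnd y.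
have vx := vanish_lbnd x; have vy := vanish_lbnd y.
case: (int_cases (a + b) n) => [hn|[d ->]].
  rewrite (lmul_vanish vx vy) ?(lmul_vanish vy vx) //; lia.
rewrite (lmul_poly (K := d.+1) vx vy) // mulrC.
have -> : a + b - d%:Z = b + a - d%:Z by lia.
by rewrite (lmul_poly (K := d.+1) vy vx).
Qed.

Lemma ladd_vanish x y a : vanish x a -> vanish y a -> vanish (ladd x y) a.
Proof. by move=> vx vy i hi /=; rewrite vx ?vy ?addr0. Qed.

Lemma tr_add x y a K : tr (ladd x y) a K = tr x a K + tr y a K.
Proof. by apply/polyP => i; rewrite coefD !coef_poly; case: ifP; rewrite ?addr0. Qed.

Lemma lcoef_add (x y : L) i : lcoef (ladd x y) i = lcoef x i + lcoef y i.
Proof. by []. Qed.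

Lemma lmulDl : left_distributive (@lmul F) (@ladd F).
Proof.
move=> x y z; apply: lext => n.
set a := Num.max (lbnd x) (lbnd y); set c := lbnd z.
have vx : vanish x a by apply: (vanish_le (vanish_lbnd x)); rewrite le_max lexx.
have vy : vanish y a by apply: (vanish_le (vanish_lbnd y)); rewrite le_max lexx orbT.
have vz := vanish_lbnd z; have vxy := ladd_vanish vx vy.
case: (int_cases (a + c) n) => [hn|[d ->]].
  by rewrite lcoef_add (lmul_vanish vx vz) ?(lmul_vanish vy vz) ?(lmul_vanish vxy vz) ?addr0.
rewrite (lmul_poly (K := d.+1) vxy vz) // lcoef_add !(lmul_poly (K := d.+1) _ vz) //.
by rewrite tr_add mulrDl coefD.
Qed.

Lemma lone_vanish : vanish (lone F) 0.
Proof. by move=> i hi /=; rewrite gt_eqF. Qed.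

Lemma lmul1 : left_id (lone F) (@lmul F).
Proof.
move=> x; apply: lext => n.
set a := lbnd x; have vx := vanish_lbnd x.
case: (int_cases (0 + a) n) => [hn|[d ->]].
  by rewrite (lmul_vanish lone_vanish vx) // vx //; move: hn; rewrite add0r.
rewrite (lmul_poly (K := d.+1) lone_vanish vx) //.
have -> : tr (lone F) 0 d.+1 = 1.
  apply/polyP => i; rewrite coef_poly coef1 /=.
  case: ifP => hi; first by case: i {hi} => [|i] //=.
  by case: i hi => [|i] //=.
by rewrite mul1r coef_poly ltnSn add0r.
Qed.

Lemma lone_neq0 : lone F <> lzero F.
Proof. by move=> /(congr1 (fun x => lcoef x 0)) /= /eqP; rewrite oner_eq0. Qed.

Lemma laddA : associative (@ladd F).
Proof. by move=> x y z; apply: lext => i /=; rewrite addrA. Qed.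
Lemma laddC : commutative (@ladd F).
Proof. by move=> x y; apply: lext => i /=; rewrite addrC. Qed.
Lemma ladd0 : left_id (lzero F) (@ladd F).
Proof. by move=> x; apply: lext => i /=; rewrite add0r. Qed.
Lemma laddN : left_inverse (lzero F) (@lopp F) (@ladd F).
Proof. by move=> x; apply: lext => i /=; rewrite addNr. Qed.

End LRing.

HB.instance Definition _ (F : finFieldType) := gen_eqMixin (laurent F).
HB.instance Definition _ (F : finFieldType) := gen_choiceMixin (laurent F).
HB.instance Definition _ (F : finFieldType) :=
  GRing.isZmodule.Build (laurent F) (@laddA F) (@laddC F) (@ladd0 F) (@laddN F).
Lemma lone_neq0' (F : finFieldType) : (lone F : laurent F) != lzero F.
Proof. by apply/eqP; apply: lone_neq0. Qed.
HB.instance Definition _ (F : finFieldType) :=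
  GRing.Zmodule_isComNzRing.Build (laurent F) (@lmulA F) (@lmulC F) (@lmul1 F)
    (@lmulDl F) (@lone_neq0' F).

Section Labs.
Variables (F : finFieldType) (R : realType).
Local Notation L := (laurent F).
Local Notation k := ((#|F|)%:R : R).

Lemma k_gt1 : 1 < k.
Proof.
have h : (1 < #|F|)%N.
  apply/card_gt1P; exists 0, 1; rewrite !inE; split => //; rewrite eq_sym; exact: oner_neq0.
by rewrite ltr1n.
Qed.
Lemma k_gt0 : 0 < k. Proof. exact: lt_trans k_gt1. Qed.
Lemma k_unit : k \is a GRing.unit. Proof. by rewrite unitfE gt_eqF // k_gt0. Qed.
Lemma kX_gt0 (d : int) : 0 < k ^ d. Proof. exact: exprz_gt0 k_gt0. Qed.
Lemma kX_ge0 (d : int) : 0 <= k ^ d. Proof. exact: ltW (kX_gt0 d). Qed.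
Lemma kX_le (d e : int) : (k ^ d <= k ^ e) = (d <= e).
Proof. exact: (ler_eXz2l k_gt1). Qed.

Lemma ldeg_uniq (x : L) d e : is_ldeg x d -> is_ldeg x e -> d = e.
Proof.
move=> [hd vd] [he ve]; apply/eqP; rewrite eq_le; apply/andP; split.
  by rewrite leNgt; apply/negP => /ve; apply/eqP.
by rewrite leNgt; apply/negP => /vd; apply/eqP.
Qed.

Lemma labs_deg (x : L) d : is_ldeg x d -> labs R x = k ^ d.
Proof.
move=> hd; rewrite /labs; case: pselect => [p|np]; last by case: np; exists d.
by case: (cid p) => e he /=; rewrite (ldeg_uniq he hd).
Qed.

Lemma ldeg_exists (x : L) i : lcoef x i != 0 -> exists d, is_ldeg x d /\ i <= d.
Proof.
move=> hi.
have hb : i <= lbnd x by rewrite leNgt; apply/negP => /lbndP; apply/eqP.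
have ex : exists j : nat, lcoef x (lbnd x - j%:Z) != 0.
  exists (tnat (lbnd x - i)); move: hb hi; case E: (lbnd x - i) => [kk|kk] /= hb hi.
    by have -> : lbnd x - kk%:Z = i by lia.
  lia.
case: (ex_minnP ex) => j hj hmin.
exists (lbnd x - j%:Z); split; [split => // l hl|].
  case: (leP l (lbnd x)) => hl2; last by apply: lbndP.
  have := hmin (tnat (lbnd x - l)).
  case E: (lbnd x - l) => [kk|kk] /=; last by lia.
  have -> : lbnd x - kk%:Z = l by lia.
  move=> hm; case: (lcoef x l =P 0) => // /eqP /hm; lia.
rewrite leNgt; apply/negP => hlt.
move: (hmin (tnat (lbnd x - i))); case E: (lbnd x - i) => [kk|kk] /=; last by lia.
have -> : lbnd x - kk%:Z = i by lia.
move=> /(_ hi); lia.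
Qed.

Lemma labs_zero (x : L) : ~ (exists d, is_ldeg x d) -> labs R x = 0 /\ x = 0.
Proof.
move=> nd; split; first by rewrite /labs; case: pselect.
apply: lext => i /=; case: (lcoef x i =P 0) => // /eqP h.
by case: nd; case: (ldeg_exists h) => d [hd _]; exists d.
Qed.

Lemma labs_cases (x : L) : (labs R x = 0 /\ x = 0) \/ (exists d, is_ldeg x d /\ labs R x = k ^ d).
Proof.
case: (pselect (exists d, is_ldeg x d)) => [[d hd]|nd]; last by left; apply: labs_zero.
by right; exists d; split => //; apply: labs_deg.
Qed.

Lemma labs_ge0 (x : L) : 0 <= labs R x.
Proof. by case: (labs_cases x) => [[-> _]|[d [_ ->]]] //; apply: kX_ge0. Qed.

Lemma labs0 : labs R (0 : L) = 0.
Proof.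
case: (labs_cases (0 : L)) => [[-> _]|[d [[hd _] _]]] //.
by move: hd; rewrite eqxx.
Qed.

Lemma labs1 : labs R (1 : L) = 1.
Proof.
rewrite (@labs_deg _ 0) ?expr0z //; split.
  by change (lcoef (lone F) 0 != 0); rewrite /= ?eqxx oner_neq0.
by move=> i hi; change (lcoef (lone F) i = 0); rewrite /= gt_eqF.
Qed.

Lemma labs_coef (x : L) i : lcoef x i != 0 -> k ^ i <= labs R x.
Proof.
move=> h; case: (ldeg_exists h) => d [hd hid]; rewrite (labs_deg hd).
by rewrite kX_le.
Qed.

Lemma labs_le (x : L) d : (labs R x <= k ^ d) <-> vanish x d.
Proof.
split.
  move=> h i hi; case: (lcoef x i =P 0) => // /eqP hne.
  have := le_trans (labs_coef hne) h; rewrite kX_le; lia.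
move=> vx; case: (labs_cases x) => [[-> _]|[e [[he ve] ->]]]; first exact: kX_ge0.
rewrite kX_le leNgt; apply/negP => /vx; exact/eqP.
Qed.

Lemma labsN (x : L) : labs R (- x) = labs R x.
Proof.
case: (labs_cases x) => [[_ ->]|[d [[hd vd] ->]]]; first by rewrite oppr0.
apply: labs_deg; split; first by rewrite /= oppr_eq0.
by move=> i hi /=; rewrite vd ?oppr0.
Qed.

Lemma labsD_le (x y : L) c : labs R x <= c -> labs R y <= c -> labs R (x + y) <= c.
Proof.
move=> hx hy.
case: (labs_cases (x + y)) => [[-> _]|[e [[he ve] ->]]]; first exact: le_trans (labs_ge0 x) hx.
move: he; rewrite lcoef_add.
case: (lcoef x e =P 0) => [h0|/eqP hne] he.
  by move: he; rewrite h0 add0r => /labs_coef /le_trans; apply.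
exact: le_trans (labs_coef hne) hx.
Qed.

Lemma labsB_sym (x y : L) : labs R (x - y) = labs R (y - x).
Proof. by rewrite -labsN opprB. Qed.

Lemma labsM (x y : L) : labs R (x * y) <= labs R x * labs R y.
Proof.
case: (labs_cases x) => [[_ ->]|[d [[hd vd] ->]]]; first by rewrite mul0r labs0 mul0r.
case: (labs_cases y) => [[_ ->]|[e [[he ve] ->]]]; first by rewrite mulr0 labs0 mulr0.
rewrite -exprzDr ?k_unit //; apply/labs_le; exact: lmul_vanish.
Qed.

Lemma labs_sum (I : Type) (s : seq I) (P : pred I) (f : I -> L) c : 0 <= c ->
  (forall i, P i -> labs R (f i) <= c) -> labs R (\sum_(i <- s | P i) f i) <= c.
Proof.
move=> c0 hf; apply: (big_ind (fun z => labs R z <= c)) => //.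
- by rewrite labs0.
- by move=> a b; apply: labsD_le.
Qed.

Lemma labs_prod (I : Type) (s : seq I) (P : pred I) (f : I -> L) :
  labs R (\prod_(i <- s | P i) f i) <= \prod_(i <- s | P i) labs R (f i).
Proof.
apply: (big_ind2 (fun z w => labs R z <= w)) => //.
- by rewrite labs1.
- move=> a1 a2 b1 b2 h1 h2; apply: le_trans (labsM _ _) _.
  by apply: ler_pM => //; apply: labs_ge0.
Qed.
End Labs.
From mathcomp.algebra_tactics Require Import lra.

Section BigMax.
Variable R : realType.
Lemma bigmax_ub (I : eqType) (s : seq I) (P : pred I) (f : I -> R) x0 i :
  i \in s -> P i -> f i <= \big[Num.max/x0]_(j <- s | P j) f j.
Proof.
elim: s => // a s IH; rewrite inE big_cons => /orP [/eqP <- ->|hi hP].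
  by rewrite le_max lexx.
case: (P a); last exact: IH.
by rewrite le_max (IH hi hP) orbT.
Qed.

Lemma bigmax_le (I : Type) (s : seq I) (P : pred I) (f : I -> R) x0 c :
  x0 <= c -> (forall i, P i -> f i <= c) -> \big[Num.max/x0]_(j <- s | P j) f j <= c.
Proof.
move=> h0 hf; apply: (big_ind (fun z => z <= c)) => //.
by move=> a b ha hb; rewrite ge_max ha hb.
Qed.

Lemma bigmax_ge0 (I : Type) (s : seq I) (P : pred I) (f : I -> R) :
  (forall i, P i -> 0 <= f i) -> 0 <= \big[Num.max/0]_(j <- s | P j) f j.
Proof.
move=> hf; apply: (big_ind (fun z => 0 <= z)) => //.
by move=> a b ha hb; rewrite le_max ha.
Qed.
End BigMax.

Section Main.
Variables (F : finFieldType) (R : realType) (m n : nat).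
Variable (y : 'I_m -> 'I_(n + m) -> laurent F).
Local Notation L := (laurent F).
Local Notation k := ((#|F|)%:R : R).

Lemma in_ballP (C : 'M[L]_(m, n)) r A :
  in_ball R C r A <-> forall i j, labs R (A i j - C i j) <= k ^ r.
Proof.
rewrite /in_ball /mxnorm; split.
  move=> h i j; apply: le_trans h.
  have := @bigmax_ub R _ (index_enum ('I_m * 'I_n)%type) xpredT
    (fun ij => labs R ((\matrix_(i, j) ladd (A i j) (lopp (C i j))) ij.1 ij.2)) 0 (i, j).
  by rewrite mem_index_enum /= mxE; apply.
move=> h; apply: bigmax_le; first exact: kX_ge0.
by move=> [i j] _ /=; rewrite mxE; apply: h.
Qed.

Lemma labs_le0 (x : L) : labs R x <= 0 -> x = 0.
Proof.
case: (labs_cases R x) => [[_ ->]|[d [_ ->]]] // h.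
by have := kX_gt0 F R d; rewrite ltNge h.
Qed.

Lemma y_bound (hy : ortho_normal R y) i kk : labs R (y i kk) <= 1.
Proof.
case: hy => _ /(_ (fun j => if j == i then 1 else 0)) h.
have e : (fun kk => \big[@ladd F/lzero F]_(j < m) lmul (if j == i then 1 else 0) (y j kk))
         = y i.
  apply: funext => kk'.
  change (\sum_(j < m) (if j == i then 1 else 0) * y j kk' = y i kk').
  rewrite (bigD1 i) //= eqxx mul1r big1 ?addr0 // => j /negbTE ->; exact: mul0r.
rewrite e in h.
have h1 : labs R (y i kk) <= vnorm R (y i).
  by rewrite /vnorm; apply: (@bigmax_ub R _ _ xpredT (fun j => labs R (y i j))); rewrite ?mem_index_enum.
apply: le_trans h1 _; rewrite h /vnorm; apply: bigmax_le => // j _.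
by case: (j == i); rewrite ?labs1 ?labs0.
Qed.

Lemma Gmx_diff (hy : ortho_normal R y) (P Q : 'M[L]_(m, n)) i l c : 0 <= c ->
  (forall kk, labs R (P l kk - Q l kk) <= c) ->
  labs R (Gmx y P i l - Gmx y Q i l) <= c.
Proof.
move=> c0 h; rewrite !mxE /ldot.
change (labs R (\sum_(kk < n + m) y i kk * tAstar P kk (lshift n l)
   - \sum_(kk < n + m) y i kk * tAstar Q kk (lshift n l)) <= c).
rewrite -sumrB; apply: labs_sum => // kk _; rewrite -mulrBr.
apply: le_trans (labsM _ _ _) _.
rewrite -[c]mul1r; apply: ler_pM; rewrite ?labs_ge0 ?y_bound //.
rewrite !mxE.
have -> : split (lshift n l) = inl l := unsplitK (inl l).
case: (split kk) => [kk'|kk'] //.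
by rewrite subrr labs0.
Qed.

Lemma ldetE w (M : 'M[L]_w) : ldet M = \det M.
Proof.
rewrite /ldet /determinant; apply: eq_bigr => s _ /=.
by case: (odd_perm s); rewrite /= ?expr1 ?expr0 ?mulN1r ?mul1r.
Qed.

Lemma labs_sgn j : labs R ((-1) ^+ j : L) = 1.
Proof.
elim: j => [|j IH]; first by rewrite expr0 labs1.
by rewrite exprS mulN1r labsN IH.
Qed.

Lemma labs_det_le w (M : 'M[L]_w) E : 0 <= E -> (forall i j, labs R (M i j) <= E) ->
  labs R (\det M) <= E ^+ w.
Proof.
move=> E0 hE; apply: labs_sum; first exact: exprn_ge0.
move=> s _; apply: le_trans (labsM _ _ _) _; rewrite labs_sgn mul1r.
apply: le_trans (labs_prod _ _ _ _) _.
have -> : E ^+ w = \prod_(i : 'I_w) E by rewrite prodr_const card_ord.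
by apply: ler_prod => i _; rewrite labs_ge0 hE.
Qed.

Lemma minor_le (P : 'M[L]_(m, n)) w (f g : 'I_w -> 'I_m) :
  (forall i j : 'I_w, (i < j)%N -> (f i < f j)%N) -> (forall i j : 'I_w, (i < j)%N -> (g i < g j)%N) ->
  labs R (\det (\matrix_(a, b) Gmx y P (f a) (g b))) <= Mnorm R y w P.
Proof.
case: w f g => [|w] f g hf hg.
  by rewrite det_mx00 /Mnorm labs1 /=; exact: le_refl.
rewrite /Mnorm.
apply: le_trans (@bigmax_ub R _ _ _ _ 0 ([ffun a => f a], [ffun b => g b]) _ _).
- rewrite ldetE /= le_eqVlt; apply/orP; left; apply/eqP.
  by congr (labs R (\det _)); apply/matrixP => a b; rewrite !mxE !ffunE.
- exact: mem_index_enum.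
- apply/andP; split; apply/forallP => i; apply/forallP => j; apply/implyP => hij;
  by rewrite /= !ffunE ?hf ?hg.
Qed.
Lemma ball_center (C0 : 'M[L]_(m, n)) r0 : in_ball R C0 r0 C0.
Proof. by apply/in_ballP => i j; rewrite subrr labs0 kX_ge0. Qed.

Lemma Mnorm_ge0 w (P : 'M[L]_(m, n)) : 0 <= Mnorm R y w P.
Proof.
case: w => [[|w]|w] /=; rewrite ?labs_ge0 //.
by apply: bigmax_ge0 => i _; apply: labs_ge0.
Qed.

Lemma Mnorm_bounded (hy : ortho_normal R y) (C0 : 'M[L]_(m, n)) r0 w :
  exists U, forall P, in_ball R C0 r0 P -> Mnorm R y w P <= U.
Proof.
case: w => [[|w]|w]; try by exists (labs R (lone F)) => P _; exact: le_refl.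
pose E := Num.max (\big[Num.max/0]_(il : 'I_m * 'I_m) labs R (Gmx y C0 il.1 il.2)) (k ^ r0).
have E0 : 0 <= E by rewrite le_max kX_ge0 orbT.
exists (E ^+ w.+1) => P hP.
rewrite /Mnorm; apply: bigmax_le; first exact: exprn_ge0.
move=> fg _; rewrite ldetE; apply: labs_det_le => // a b; rewrite mxE.
set i := fg.1 a; set l := fg.2 b.
rewrite -[Gmx y P i l](subrK (Gmx y C0 i l)); apply: labsD_le.
  have hkE : k ^ r0 <= E by rewrite le_max lexx orbT.
  apply: le_trans hkE; apply: (Gmx_diff hy) => //; first exact: kX_ge0.
  by move=> kk; move/in_ballP: hP; apply.
have hbE : \big[Num.max/0]_(il : 'I_m * 'I_m) labs R (Gmx y C0 il.1 il.2) <= E.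
  by rewrite le_max lexx.
apply: le_trans hbE.
by apply: (@bigmax_ub R _ _ xpredT (fun il => labs R (Gmx y C0 il.1 il.2)) 0 (i, l)); rewrite ?mem_index_enum.
Qed.

Lemma Mball_props (hy : ortho_normal R y) (C0 : 'M[L]_(m, n)) r0 w :
  (forall P, in_ball R C0 r0 P -> Mnorm R y w P <= Mball R y w C0 r0) /\
  0 <= Mball R y w C0 r0.
Proof.
have hs : has_sup [set Mnorm R y w A | A in in_ball R C0 r0].
  split; first by exists (Mnorm R y w C0); exists C0 => //; apply: ball_center.
  case: (Mnorm_bounded hy C0 r0 w) => U hU; exists U => z [A hA <-]; exact: hU.
have ub := sup_upper_bound hs.
have h1 : forall P, in_ball R C0 r0 P -> Mnorm R y w P <= Mball R y w C0 r0.
  by move=> P hP; apply: ub; exists P.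
split => //; apply: le_trans (h1 C0 (ball_center _ _)); exact: Mnorm_ge0.
Qed.

Lemma Mball_le (C0 : 'M[L]_(m, n)) r0 w c :
  (forall P, in_ball R C0 r0 P -> Mnorm R y w P <= c) -> Mball R y w C0 r0 <= c.
Proof.
move=> h; apply: ge_sup; first by exists (Mnorm R y w C0); exists C0 => //; apply: ball_center.
by move=> z [A hA <-]; apply: h.
Qed.

Lemma det_diff_col w (P Q : 'M[L]_w) b0 :
  (forall a b, b != b0 -> P a b = Q a b) ->
  \det P - \det Q = \sum_a (P a b0 - Q a b0) * cofactor P a b0.
Proof.
move=> h; rewrite (expand_det_col P b0) (expand_det_col Q b0) -sumrB.
apply: eq_bigr => a _; rewrite mulrBl; congr (_ - _ * _).
rewrite /cofactor; congr (_ * \det _); apply/matrixP => i j; rewrite !mxE h //.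
by rewrite eq_sym; apply: neq_lift.
Qed.
Lemma mon_bnd (d : int) : bounded_above (fun i => if i == d then (1 : F) else 0).
Proof. by exists d => i hi; rewrite gt_eqF. Qed.
Definition lmon (d : int) : L := Laurent (mon_bnd d).

Lemma labs_mon d : labs R (lmon d) = k ^ d.
Proof.
apply: labs_deg; split; first by rewrite /= eqxx oner_neq0.
by move=> i hi /=; rewrite gt_eqF.
Qed.

Lemma ball_diff (C0 : 'M[L]_(m, n)) r0 P Q l kk :
  in_ball R C0 r0 P -> in_ball R C0 r0 Q -> labs R (P l kk - Q l kk) <= k ^ r0.
Proof.
move=> /in_ballP hP /in_ballP hQ.
have -> : P l kk - Q l kk = (P l kk - C0 l kk) + - (Q l kk - C0 l kk).
  by rewrite opprB addrA subrK.
by apply: labsD_le; rewrite ?labsN.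
Qed.

Lemma radius_mono (C0 C1 : 'M[L]_(m, n)) r0 r1 : (0 < m)%N -> (0 < n)%N ->
  (forall A, in_ball R C1 r1 A -> in_ball R C0 r0 A) -> k ^ r1 <= k ^ r0.
Proof.
move=> hm hn hinc.
pose i0 := Ordinal hm; pose j0 := Ordinal hn.
pose E : 'M[L]_(m, n) := \matrix_(i, j) if (i == i0) && (j == j0) then lmon r1 else 0.
have hA : in_ball R C1 r1 (C1 + E).
  apply/in_ballP => i j; rewrite !mxE addrAC subrr add0r.
  by case: ifP => _; rewrite ?labs_mon ?labs0 ?kX_ge0.
have := ball_diff i0 j0 (hinc _ hA) (hinc _ (ball_center C1 r1)).
by rewrite !mxE addrAC subrr add0r ?eqxx labs_mon.
Qed.

Lemma lift_incr w (h : 'I_w.+1) (i j : 'I_w) : (i < j)%N -> (lift h i < lift h j)%N.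
Proof.
rewrite /= /bump; case hi: (h <= i)%N; case hj: (h <= j)%N => /=; lia.
Qed.

Lemma incr_inj w (g : 'I_w -> 'I_m) : (forall i j : 'I_w, (i < j)%N -> (g i < g j)%N) ->
  forall b b1, b != b1 -> (g b != g b1 :> nat).
Proof.
move=> hg b b1 hne; case: (ltngtP b b1) => [lt|gt|eq].
- by rewrite neq_ltn (hg _ _ lt).
- by rewrite neq_ltn (hg _ _ gt) orbT.
- by move: hne; rewrite (val_inj eq) eqxx.
Qed.

Lemma sub_mxE w (P : 'M[L]_(m, n)) (f g : 'I_w -> 'I_m) a b :
  (\matrix_(a, b) Gmx y P (f a) (g b)) a b = Gmx y P (f a) (g b).
Proof. by rewrite mxE. Qed.

Lemma minor_diff (hy : ortho_normal R y) (C' C'' : 'M[L]_(m, n)) r' r''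
  (hinc : forall A, in_ball R C' r' A -> in_ball R C'' r'' A) w (f g : 'I_w.+1 -> 'I_m) :
  (forall i j : 'I_w.+1, (i < j)%N -> (f i < f j)%N) ->
  (forall i j : 'I_w.+1, (i < j)%N -> (g i < g j)%N) ->
  forall A A', in_ball R C' r' A -> in_ball R C' r' A' ->
  labs R (\det (\matrix_(a, b) Gmx y A (f a) (g b)) - \det (\matrix_(a, b) Gmx y A' (f a) (g b)))
    <= k ^ r' * Mball R y w C'' r''.
Proof.
move=> hf hg A A' hA hA'.
set K := Mball R y w C'' r''.
have [hK K0] := Mball_props hy C'' r'' w.
pose At (t : nat) : 'M[L]_(m, n) := \matrix_(l, kk) if (l < t)%N then A' l kk else A l kk.
have hAt : forall t, in_ball R C' r' (At t).
  move=> t; apply/in_ballP => l kk; rewrite mxE.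
  by case: ifP => _; [move/in_ballP: hA'; apply | move/in_ballP: hA; apply].
have e0 : At 0%N = A by apply/matrixP => l kk; rewrite mxE ltn0.
have em : At m = A' by apply/matrixP => l kk; rewrite mxE ltn_ord.
pose S (t : nat) := \det (\matrix_(a, b) Gmx y (At t) (f a) (g b)).
have -> : \det (\matrix_(a, b) Gmx y A (f a) (g b)) - \det (\matrix_(a, b) Gmx y A' (f a) (g b))
   = \sum_(t < m) (S t - S t.+1).
  have tel := @telescope_sumr _ 0%N m S (leq0n m).
  rewrite big_mkord in tel.
  transitivity (- (S m - S 0%N)); first by rewrite opprB /S e0 em.
  by rewrite -tel -sumrN; apply: eq_bigr => t _; rewrite opprB.
have c0 : 0 <= k ^ r' * K by rewrite mulr_ge0 ?kX_ge0.
apply: labs_sum => // t _.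
have [b0 hb0] : exists b0 : 'I_w.+1, forall b, b != b0 -> (g b != t :> nat).
  case: (pselect (exists b, g b = t :> nat)) => [[b1 hb1]|nb].
    by exists b1 => b hne; rewrite -hb1; apply: incr_inj.
  by exists ord0 => b _; apply/eqP => e; apply: nb; exists b.
rewrite /S (@det_diff_col _ _ _ b0); last first.
  move=> a b hb; rewrite !sub_mxE; apply/eqP; rewrite -subr_eq0; apply/eqP.
  apply: labs_le0; apply: (Gmx_diff hy) => // kk.
  have e : (g b < t.+1)%N = (g b < t)%N by rewrite ltnS leq_eqVlt (negbTE (hb0 _ hb)).
  rewrite !mxE e subrr labs0; exact: le_refl.
apply: labs_sum => // a _.
apply: le_trans (labsM _ _ _) _; apply: ler_pM; rewrite ?labs_ge0 //.
  rewrite !sub_mxE; apply: (Gmx_diff hy); first exact: kX_ge0.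
  by move=> kk; apply: ball_diff (hAt _) (hAt _).
rewrite /cofactor; apply: le_trans (labsM _ _ _) _; rewrite labs_sgn mul1r.
have -> : row' a (col' b0 (\matrix_(a0, b) Gmx y (At t) (f a0) (g b)))
   = \matrix_(a', b') Gmx y (At t) (f (lift a a')) (g (lift b0 b')).
  by apply/matrixP => i j; rewrite !mxE.
apply: le_trans (minor_le _ _ _) (hK _ (hinc _ (hAt _))).
- by move=> i j hij; apply: hf; apply: lift_incr.
- by move=> i j hij; apply: hg; apply: lift_incr.
Qed.
End Main.
Unset Implicit Arguments. Set Strict Implicit.
Theorem corollary3p4 (F : finFieldType) (R : realType) (m n : nat)
  (y : 'I_m -> 'I_(n + m) -> laurent F)
  (hy : ortho_normal R y)
  (v : nat) (hv1 : (1 <= v)%N) (hvm : (v <= m)%N)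
  (C : 'M[laurent F]_(m, n)) (r : int)       (* B   = ball C r   *)
  (C'' : 'M[laurent F]_(m, n)) (r'' : int)   (* B'' = ball C'' r'' *)
  (C' : 'M[laurent F]_(m, n)) (r' : int)     (* B'  = ball C' r'  *)
  (mu : R) :
  (forall A, in_ball R C'' r'' A -> in_ball R C r A) ->
  0 < mu ->
  (forall A, in_ball R C'' r'' A ->
     radius F R r * mu * Mball R y (v%:Z - 2) C'' r'' < Mnorm R y (v%:Z - 1) A) ->
  (forall A, in_ball R C' r' A -> in_ball R C'' r'' A) ->
  radius F R r' < 2^-1 * mu * radius F R r'' ->
  forall A', in_ball R C' r' A' ->
    2^-1 * Mball R y (v%:Z - 1) C' r' < Mnorm R y (v%:Z - 1) A'.
Proof.
move=> hB'' mu0 hyp hB' hr A' hA'.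
have hA'' := hB' _ hA'.
case: v hv1 hvm hyp => [|[|w]] hv1 hvm hyp //.
  have e : (1%:Z - 1 = 0 :> int) by [].
  rewrite e.
  have hM : Mball R y 0 C' r' <= 1.
    by apply: Mball_le => P _; rewrite /Mnorm labs1.
  rewrite /Mnorm labs1; lra.
have e1 : (w.+2)%:Z - 1 = Posz w.+1 by rewrite -addn1 PoszD addrK.
have e2 : (w.+2)%:Z - 2 = Posz w by rewrite -addn2 PoszD addrK.
rewrite e1 e2 in hyp *.
have [hK K0] := Mball_props hy C'' r'' w.
set K := Mball R y w C'' r'' in hyp K0 hK.
set c := Mnorm R y w.+1 A'.
have hc : radius F R r * mu * K < c := hyp _ hA''.
have kr0 : 0 <= radius F R r by apply: kX_ge0.
have c0 : 0 < c.
  by apply: le_lt_trans hc; rewrite mulr_ge0 // mulr_ge0 // ltW.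
suff hle : forall A, in_ball R C' r' A -> Mnorm R y w.+1 A <= c.
  have hM : Mball R y w.+1 C' r' <= c := Mball_le hle.
  lra.
move=> A hA; rewrite /Mnorm; apply: bigmax_le; first exact: ltW.
move=> [f g] /andP [hf hg] /=.
have hf' : forall i j : 'I_w.+1, (i < j)%N -> (f i < f j)%N.
  by move=> i j; move/forallP: hf => /(_ i) /forallP /(_ j) /implyP.
have hg' : forall i j : 'I_w.+1, (i < j)%N -> (g i < g j)%N.
  by move=> i j; move/forallP: hg => /(_ i) /forallP /(_ j) /implyP.
rewrite ldetE.
set DA := \det _; set DA' := \det (\matrix_(a, b) Gmx y A' (f a) (g b)).
rewrite -(subrK DA' DA); apply: labsD_le; last exact: minor_le.
have [n0|npos] := posnP n.
  have eAA : A = A' by apply/matrixP => i j; have := ltn_ord j; rewrite {2}n0.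
  by rewrite /DA /DA' eAA subrr labs0 ltW.
apply: le_trans (minor_diff hy hB' hf' hg' hA hA') _.
have hrr : radius F R r'' <= radius F R r.
  by apply: (radius_mono _ _ hB'') => //; apply: leq_trans hvm.
have hk' : 0 <= radius F R r'' by apply: kX_ge0.
rewrite -/K.
apply: le_trans (_ : radius F R r' * K <= (2^-1 * mu * radius F R r'') * K) _.
  by apply: ler_wpM2r => //; apply: ltW.
apply: le_trans (ltW hc); apply: ler_wpM2r => //.
have h1 : mu * radius F R r'' <= mu * radius F R r by apply: ler_wpM2l => //; apply: ltW.
have h2 : 0 <= mu * radius F R r'' by apply: mulr_ge0 => //; apply: ltW.
rewrite -mulrA [radius F R r * mu]mulrC; lra.
Qed.
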